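(* Consider simple tornado hashing, i.e. a random tornado tabulation hash function with $d$ derived characters in which $\tilde h_0\equiv0$. Let $M$ be a partial matching on $\Sigma^c$ and let $i\in\{1,\dots,d\}$. Conditioned on $M$ being $(i-1)$-independent, $M$ is an $i$-matching with probability $1/|\Sigma|^{|M|}$.
   Context: Let $\Sigma=\{0,\dots,2^k-1\}$, identified with $k$-bit strings, $\oplus$ bitwise xor. A simple tabulation hash function $g:\Sigma^b\to\Sigma$ is $g(x_1\cdots x_b)=T_1[x_1]\oplus\cdots\oplus T_b[x_b]$ with independent fully random tables $T_i:\Sigma\to\Sigma$. Simple tornado hashing uses mutually independent simple tabulation functions $\tilde h_i:\Sigma^{c+i-1}\to\Sigma$, $i=1,\dots,d$; the derived key of $x=x_1\cdots x_c$ is $\tilde x=\tilde x_1\cdots\tilde x_{c+d}$ with $\tilde x_i=x_i$ for $i\le c$ and $\tilde x_i=\tilde h_{i-c}(\tilde x_1\cdots\tilde x_{i-1})$ for $i>c$. A generalized key is a subset of $\{1,\dots,c+d\}\times\Sigma$ (pairs are position characters); a key $y\in\Sigma^{c+d}$ is identified with $\{(j,y_j)\}$. For a generalized key $z$, $z[\le j]=\{(l,a)\in z: l\le j\}$. A set of generalized keys is linearly independent if no nonempty subset of it has empty symmetric difference (i.e., no nonempty subset in which every position character occurs an even number of times). A partial matching $M$ on $\Sigma^c$ is a set of pairwise disjoint unordered pairs $\{x,y\}$ of distinct keys. $M$ is an $i$-matching if $\tilde x_{c+i}=\tilde y_{c+i}$ for every $\{x,y\}\in M$. $M$ is $j$-independent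 if the set $\{(\tilde x\triangle\tilde y)[\le c+j]:\{x,y\}\in M\}$ is linearly independent (where $\triangle$ is symmetric difference of position-character sets) and consists of $|M|$ distinct elements. *)

(* Defs.v *)
From mathcomp Require Import all_boot all_order all_algebra.
Set Implicit Arguments. Unset Strict Implicit. Unset Printing Implicit Defensive.

Section Tornado.
Variables (k c d : nat).

(* Alphabet Sigma = k-bit strings; xor is pointwise addb. *)
Definition Sig := {ffun 'I_k -> bool}.
Definition sig0 : Sig := [ffun => false].

Definition key := {ffun 'I_c -> Sig}.
Definition dkeyT := {ffun 'I_(c + d) -> Sig}.

(* The randomness: for the i-th (0-based) simple tabulation function,
   tables indexed by positions j; only j < c + i are used (the others are
   independent dummy tables and do not affect any probability). *)
Definition Tab := {ffun 'I_d -> {ffun 'I_(c + d) -> {ffun Sig -> Sig}}}.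

Definition tab (T : Tab) (n : nat) (j : 'I_(c + d)) : {ffun Sig -> Sig} :=
  if insub n is Some i then T i j else [ffun a => a].

(* derseq T x n = the first c + n characters of the derived key. *)
Fixpoint derseq (T : Tab) (x : key) (n : nat) : seq Sig :=
  match n with
  | 0 => [seq x j | j : 'I_c]
  | n'.+1 =>
      let s := derseq T x n' in
      rcons s [ffun b => \big[addb/false]_(j : 'I_(c + d) | j < c + n')
                           tab T n' j (nth sig0 s j) b]
  end.

Definition dkey (T : Tab) (x : key) : dkeyT :=
  [ffun l : 'I_(c + d) => nth sig0 (derseq T x d) l].

Definition gkey (y : dkeyT) : {set 'I_(c + d) * Sig} := [set p | y p.1 == p.2].

(* z[<= m] with 1-based positions = positions with 0-based index < m. *)
Definition trunc (z : {set 'I_(c + d) * Sig}) (m : nat) :=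
  [set p in z | p.1 < m].

Definition symdiff (Q : {set {set 'I_(c + d) * Sig}}) : {set 'I_(c + d) * Sig} :=
  [set p | odd #|[set z in Q | p \in z]|].

Definition lin_indep (S : {set {set 'I_(c + d) * Sig}}) : bool :=
  [forall Q : {set {set 'I_(c + d) * Sig}},
     (Q \subset S) ==> (Q != set0) ==> (symdiff Q != set0)].

Definition partial_matching (M : {set {set key}}) : Prop :=
  (forall e, e \in M -> #|e| = 2) /\
  (forall e e', e \in M -> e' \in M -> e != e' -> [disjoint e & e']).

Definition pdiff (T : Tab) (e : {set key}) (j : nat) :=
  trunc (symdiff [set gkey (dkey T x) | x in e]) (c + j).

Definition j_independent (T : Tab) (M : {set {set key}}) (j : nat) : bool :=
  lin_indep [set pdiff T e j | e in M] && (#|[set pdiff T e j | e in M]| == #|M|).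

(* i-matching (1 <= i <= d): derived character at 1-based position c+i
   (0-based index c+i-1) agrees on each pair. *)
Definition i_matching (T : Tab) (M : {set {set key}}) (i : nat) : bool :=
  [forall e in M, forall x in e, forall y in e,
    nth sig0 (derseq T x d) (c + i - 1) == nth sig0 (derseq T y d) (c + i - 1)].

Definition Pr (E : pred Tab) : rat := (#|E|%:R / #|Tab|%:R)%R.

End Tornado.

(* Main.v *)
Require Import Defs.
From mathcomp Require Import all_boot all_order all_algebra.
From mathcomp Require Import ring.
Import GRing.Theory.


Lemma sum_bool (T : finType) (b : pred T) : \sum_(t : T) (b t : nat) = #|b|.
Proof. by rewrite -sum1_card [in RHS]big_mkcond; apply: eq_bigr => t _; rewrite unfold_in; case: (b t). Qed.

Lemma F2_cases (x : 'F_2) : x = 0%R \/ x = 1%R.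
Proof. by case: x => [[|[|]]] //= H; [left|right]; apply/val_inj. Qed.

Lemma F2_nat0 n : (n%:R : 'F_2)%R = 0%R -> ~~ odd n.
Proof. rewrite -(Fp_nat_mod (isT : prime 2)) modn2. by case: (odd n). Qed.

Definition Amx k c d (V : {set {set 'I_(c + d) * Sig k}}) :
  'M['F_2]_(#|V|, #|{: 'I_(c + d) * Sig k}|) :=
  (\matrix_(r < #|V|, q < #|{: 'I_(c + d) * Sig k}|) (((enum_val q : 'I_(c + d) * Sig k) \in (enum_val r : {set _}) : bool)%:R))%R.

Arguments Amx : clear implicits.

Lemma lin_rowfree k c d (V : {set {set 'I_(c + d) * Sig k}}) :
  @lin_indep k c d V -> row_free (Amx k c d V).
Proof.
move=> LI; rewrite -kermx_eq0; apply/eqP/matrixP => i j.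
apply/eqP; rewrite [X in _ == X]mxE; apply/negP => nz.
set u := row i (kermx (Amx k c d V)).
have uA : (u *m Amx k c d V = 0)%R by apply/eqP; rewrite -sub_kermx row_sub.
set Q := [set enum_val r | r in [pred r : 'I_#|V| | u ord0 r != 0%R]].
have QV : Q \subset V by apply/subsetP => z /imsetP [r _ ->]; exact: enum_valP.
have Q0 : Q != set0.
  apply/set0Pn; exists (enum_val j); apply/imsetP; exists j => //.
  by rewrite inE /u mxE; apply/negP.
move/forallP: LI => /(_ Q); rewrite QV Q0 /= => /negP; apply.
apply/eqP/setP => p; rewrite !inE.
clearbody u.
move/matrixP: uA => /(_ ord0 (enum_rank p)); rewrite !mxE.
rewrite (eq_bigr (fun r => (((u ord0 r != 0%R) && (p \in enum_val r) : bool)%:R)%R)); last first.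
  move=> r _; rewrite !mxE enum_rankK.
  by case: (F2_cases (u ord0 r)) => ->; rewrite ?mul0r ?mul1r ?eqxx ?oner_neq0.
rewrite -natr_sum sum_bool => /F2_nat0 /negPf <-.
congr (odd _).
have -> : [set z in Q | p \in z] = [set enum_val r | r in [pred r : 'I_#|V| | (u ord0 r != 0%R) && (p \in enum_val r)]].
  apply/setP => z; rewrite !inE; apply/andP/imsetP.
    by case=> /imsetP [r Hr ->] pz; exists r => //; rewrite inE; rewrite inE in Hr; rewrite Hr.
  case=> r; rewrite inE => /andP [Hr pr] ->; split => //; apply/imsetP; exists r => //.
by rewrite card_imset //; exact: enum_val_inj.
Qed.
Lemma card_sel2 (T : finType) (a b : T) (P : pred T) :
  a != b -> #|[set z in [set a; b] | P z]| = P a + P b.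
Proof.
move=> ab.
have -> : #|[set z in [set a; b] | P z]| = \sum_(z in [set a; b]) (P z : nat).
  rewrite -sum1_card big_mkcond [RHS]big_mkcond /=.
  by apply: eq_bigr => z _; rewrite !inE; case: (_ || _); case: (P z).
by rewrite big_setU1 ?big_set1 //= inE.
Qed.

Lemma size_derseq k c d (T : Tab k c d) x n : size (derseq T x n) = c + n.
Proof. elim: n => [|n IH] /=; first by rewrite size_map size_enum_ord addn0.
by rewrite size_rcons IH addnS. Qed.

Lemma nth_derseq k c d (T : Tab k c d) x n m l :
  n <= m -> l < c + n -> nth (sig0 k) (derseq T x m) l = nth (sig0 k) (derseq T x n) l.
Proof.
move=> nm ln; elim: m nm => [|m IH]; first by rewrite leqn0 => /eqP ->.
rewrite leq_eqVlt => /orP [/eqP -> //|]; rewrite ltnS => nm.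
rewrite /= nth_rcons size_derseq (leq_trans ln) ?leq_add2l //.
exact: IH.
Qed.

Lemma nth_derseq0 k c d (T : Tab k c d) x (l : 'I_c) : nth (sig0 k) (derseq T x 0) l = x l.
Proof. by rewrite /= (nth_map l) ?size_enum_ord // nth_ord_enum. Qed.

Definition upd k c d (T : Tab k c d) (i0 : 'I_d) U : Tab k c d :=
  [ffun j => if j == i0 then U else T j].
Arguments upd {k c d}.

Lemma derseq_upd k c d (T : Tab k c d) (i0 : 'I_d) U (x : key k c) n :
  n <= i0 -> derseq (upd T i0 U) x n = derseq T x n.
Proof.
elim: n => [//|n IH] lt /=; rewrite IH ?(ltnW lt) //.
congr rcons; apply/ffunP => b; rewrite !ffunE; apply: eq_bigr => j _.
rewrite /tab; case: insubP => // i _ vi.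
by rewrite ffunE; case: eqP => // ei; move: lt; rewrite -vi ei ltnn.
Qed.

Lemma char_upd k c d (T : Tab k c d) (i0 : 'I_d) U x :
  nth (sig0 k) (derseq (upd T i0 U) x d) (c + i0) =
  [ffun b => \big[addb/false]_(j : 'I_(c + d) | j < c + i0)
                U j (nth (sig0 k) (derseq T x i0) j) b].
Proof.
rewrite (@nth_derseq _ _ _ _ x i0.+1) ?ltn_ord ?addnS ?ltnS //=.
rewrite nth_rcons size_derseq ltnn eqxx derseq_upd //.
apply/ffunP => b; rewrite !ffunE; apply: eq_bigr => j _.
by rewrite /tab valK ffunE eqxx.
Qed.

Lemma gkey_neq k c d (T : Tab k c d) (x y : key k c) :
  x != y -> gkey (dkey T x) != gkey (dkey T y).
Proof.
move=> xy; apply/negP => /eqP E; move/negP: xy; apply; apply/eqP/ffunP => l.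
set l' := widen_ord (leq_addr d c) l.
have : (l', dkey T x l') \in gkey (dkey T x) by rewrite inE eqxx.
rewrite E inE /= !ffunE /= !(@nth_derseq _ _ _ T _ 0) ?addn0 ?ltn_ord //.
by rewrite !nth_derseq0 => /eqP.
Qed.

Lemma pdiff_pair k c d (T : Tab k c d) (x y : key k c) j :
  x != y -> j <= d ->
  pdiff T [set x; y] j =
  [set p : 'I_(c + d) * Sig k | (p.1 < c + j) && ((nth (sig0 k) (derseq T x j) p.1 == p.2) !=
                              (nth (sig0 k) (derseq T y j) p.1 == p.2))].
Proof.
move=> xy jd; apply/setP => p; rewrite /pdiff /trunc /symdiff !inE.
rewrite imsetU1 imset_set1 card_sel2 ?gkey_neq // oddD !inE.
case: ltnP => lt; rewrite ?andbF ?andbT //=.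
rewrite !ffunE !(@nth_derseq _ _ _ T _ j) //.
by case: (_ == _); case: (_ == _).
Qed.
Lemma core_mx (m n k : nat) (A : 'M['F_2]_(m, n)) :
  row_free A ->
  (\sum_(X : 'M['F_2]_(n, k)) (A *m X == 0)%R) * #|{: 'M['F_2]_(m, k)}| =
  #|{: 'M['F_2]_(n, k)}|.
Proof.
move=> /row_freeP [B AB].
have fib : forall W : 'M['F_2]_(m, k),
  \sum_(X : 'M['F_2]_(n, k)) (A *m X == W)%R = \sum_(X : 'M['F_2]_(n, k)) (A *m X == 0)%R.
  move=> W; rewrite (reindex_inj (addIr (B *m W)%R)) /=.
  apply: eq_bigr => X _; rewrite mulmxDr mulmxA AB mul1mx.
  by rewrite -{2}(add0r W) (inj_eq (addIr W)).
have -> : #|{: 'M['F_2]_(n,k)}| = \sum_(X : 'M['F_2]_(n,k)) 1 by rewrite sum1_card.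
have -> : #|{: 'M['F_2]_(m,k)}| = \sum_(X : 'M['F_2]_(m,k)) 1 by rewrite sum1_card.
rewrite [in RHS](partition_big (fun X => A *m X)%R xpredT) //=.
rewrite big_distrr /= .
apply: eq_bigr => W _; rewrite muln1 -(fib W).
rewrite [in RHS]big_mkcond /=; apply: eq_bigr => X _. by case: (A *m X == W)%R.
Qed.

Definition beta (bb : bool) : 'F_2 := ((bb : nat)%:R)%R.

Lemma beta_add (u w : bool) : beta (u (+) w) = (beta u + beta w)%R.
Proof. by case: u; case: w; rewrite /beta /= ?addr0 ?add0r //; apply/val_inj. Qed.

Lemma beta_eq (u w : bool) : (beta u + beta w == 0)%R = (u == w).
Proof. by case: u; case: w => //; apply/eqP; apply/val_inj. Qed.

Notation Table k c d := {ffun 'I_(c + d) -> {ffun Sig k -> Sig k}}.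

Definition mxU k c d (U : Table k c d) : 'M['F_2]_(#|{: 'I_(c + d) * Sig k}|, k) :=
  (\matrix_(q < #|{: 'I_(c + d) * Sig k}|, b < k)
     beta (U (enum_val q : 'I_(c + d) * Sig k).1 (enum_val q : 'I_(c + d) * Sig k).2 b))%R.

Definition tabX k c d (X : 'M['F_2]_(#|{: 'I_(c + d) * Sig k}|, k)) : Table k c d :=
  [ffun j => [ffun a => [ffun b => X (enum_rank (j, a)) b == 1%R]]].
Arguments mxU {k c d}.
Arguments tabX {k c d}.

Lemma mxU_tabX k c d X : mxU (@tabX k c d X) = X.
Proof.
apply/matrixP => q b; rewrite !mxE !ffunE -surjective_pairing enum_valK.
by case: (F2_cases (X q b)) => ->; rewrite ?eqxx // eq_sym oner_eq0.
Qed.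

Lemma tabX_mxU k c d U : tabX (@mxU k c d U) = U.
Proof.
apply/ffunP => j; apply/ffunP => a; apply/ffunP => b; rewrite !ffunE !mxE enum_rankK /=.
by case: (U j a b) => //; rewrite eq_sym oner_eq0.
Qed.

Lemma sum_pick (I : finType) (i : I) (G : I -> 'F_2) :
  (\sum_(a : I) ((i == a : bool)%:R * G a) = G i)%R.
Proof.
rewrite (bigD1 i) //= eqxx mul1r big1 ?addr0 // => a; rewrite ?andTb => /negbTE.
by rewrite eq_sym => ->; rewrite mul0r.
Qed.

Lemma form_pair k c d (U : Table k c d) (s t : seq (Sig k)) (L : nat) (b : 'I_k) :
  (beta (\big[addb/false]_(j : 'I_(c + d) | (j < L)%N) U j (nth (sig0 k) s j) b) +
   beta (\big[addb/false]_(j : 'I_(c + d) | (j < L)%N) U j (nth (sig0 k) t j) b))%R =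
  (\sum_(q < #|{: 'I_(c + d) * Sig k}|)
     ((enum_val q : 'I_(c + d) * Sig k) \in
        [set p : 'I_(c + d) * Sig k | (p.1 < L)%N && ((nth (sig0 k) s p.1 == p.2) !=
                              (nth (sig0 k) t p.1 == p.2))] : bool)%:R * mxU U q b)%R.
Proof.
have -> : (\sum_(q < #|{: 'I_(c + d) * Sig k}|)
     ((enum_val q : 'I_(c + d) * Sig k) \in
        [set p : 'I_(c + d) * Sig k | (p.1 < L)%N && ((nth (sig0 k) s p.1 == p.2) !=
                              (nth (sig0 k) t p.1 == p.2))] : bool)%:R * mxU U q b)%R =
  (\sum_(p : 'I_(c + d) * Sig k) ((p \in
        [set p : 'I_(c + d) * Sig k | (p.1 < L)%N && ((nth (sig0 k) s p.1 == p.2) !=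
                              (nth (sig0 k) t p.1 == p.2))] : bool)%:R * beta (U p.1 p.2 b)))%R.
  rewrite (reindex (@enum_val _ (pred_of_argType ('I_(c + d) * Sig k)))) /=; last first.
    by exists enum_rank => ? _; rewrite ?enum_valK ?enum_rankK.
  by apply: eq_bigr => q _; rewrite mxE.
have E : forall G : 'I_(c + d) * Sig k -> 'F_2,
  (\sum_(p : 'I_(c + d) * Sig k) G p = \sum_(j : 'I_(c + d)) \sum_(a : Sig k) G (j, a))%R.
  by move=> G; rewrite pair_bigA; apply: eq_bigr => -[].
rewrite E /=.
rewrite !(big_morph beta beta_add (erefl _)) -big_split /=.
rewrite [RHS](bigID (fun j : 'I_(c + d) => (j < L)%N)) /= [X in (_ + X)%R]big1 ?addr0; last first.
  by move=> j /negbTE jL; apply: big1 => a _; rewrite inE /= jL mul0r.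
apply: eq_bigr => j jL.
rewrite -[beta (U j (nth _ s j) b)](sum_pick _ (nth (sig0 k) s j) (fun a => beta (U j a b))).
rewrite -[beta (U j (nth _ t j) b)](sum_pick _ (nth (sig0 k) t j) (fun a => beta (U j a b))).
rewrite -big_split /=; apply: eq_bigr => a _; rewrite inE /= jL -mulrDl.
congr (_ * _)%R.
by case: (_ == a); case: (_ == a) => //=; rewrite ?addr0 ?add0r //; apply/val_inj.
Qed.

Lemma char_eq k c d (T : Tab k c d) (i0 : 'I_d) (U : Table k c d) (x y : key k c) :
  x != y ->
  (nth (sig0 k) (derseq (upd T i0 U) x d) (c + i0) ==
   nth (sig0 k) (derseq (upd T i0 U) y d) (c + i0)) =
  [forall b : 'I_k, (\sum_(q < #|{: 'I_(c + d) * Sig k}|)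
     ((enum_val q : 'I_(c + d) * Sig k) \in pdiff T [set x; y] i0 : bool)%:R
       * mxU U q b == 0)%R].
Proof.
move=> xy; rewrite !char_upd pdiff_pair ?(ltnW (ltn_ord i0)) //.
apply/eqP/forallP.
  move=> /ffunP E b; move: (E b); rewrite !ffunE => Eb.
  by rewrite -form_pair beta_eq Eb.
move=> H; apply/ffunP => b; rewrite !ffunE; apply/eqP; rewrite -beta_eq form_pair.
exact: H b.
Qed.

Lemma match_iff k c d (T : Tab k c d) (i0 : 'I_d) (M : {set {set key k c}})
    (U : Table k c d) :
  partial_matching M ->
  i_matching (upd T i0 U) M i0.+1 =
  (Amx k c d [set pdiff T e i0 | e in M] *m mxU U == 0)%R.
Proof.
move=> [Pc _]; rewrite /i_matching.
have -> : (c + i0.+1 - 1 = c + i0)%N by rewrite addnS subn1.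
set V := [set pdiff T e i0 | e in M].
apply/forallP/eqP.
  move=> H; apply/matrixP => r b; rewrite !mxE.
  have : enum_val r \in V := enum_valP r.
  case/imsetP => e eM Er.
  move: (Pc e eM) => /eqP /cards2P [x [y [xy Ee]]].
  have := H e; rewrite eM /= => /forallP /(_ x).
  rewrite Ee !inE eqxx /= => /forallP /(_ y); rewrite !inE eqxx orbT /=.
  rewrite char_eq // => /forallP /(_ b) /eqP E; rewrite -[in RHS]E.
  by apply: eq_bigr => q _; rewrite !mxE Er Ee.
move=> /matrixP H e; apply/implyP => eM.
move: (Pc e eM) => /eqP /cards2P [x [y [xy Ee]]].
have HV : pdiff T e i0 \in V by apply/imsetP; exists e.
have Er : enum_val (enum_rank_in HV (pdiff T e i0)) = pdiff T e i0 by rewrite enum_rankK_in.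
have Hxy : nth (sig0 k) (derseq (upd T i0 U) x d) (c + i0) ==
   nth (sig0 k) (derseq (upd T i0 U) y d) (c + i0).
  rewrite char_eq //; apply/forallP => b; move: (H (enum_rank_in HV (pdiff T e i0)) b).
  rewrite !mxE => E; rewrite -[X in _ == X]E; apply/eqP; apply: eq_bigr => q _; rewrite !mxE Er Ee.
  done.
apply/forallP => x'; apply/implyP; rewrite Ee !inE => /orP [] /eqP ->;
  apply/forallP => y'; apply/implyP; rewrite !inE => /orP [] /eqP ->;
  by rewrite ?eqxx // eq_sym.
Qed.

Lemma sum_upd k c d (i0 : 'I_d) (P : pred (Tab k c d)) :
  #|P| * #|{: Table k c d}| =
  \sum_(T : Tab k c d) \sum_(U : Table k c d) P (upd T i0 U).
Proof.
rewrite pair_bigA /=.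
pose h := fun p : Tab k c d * Table k c d => (upd p.1 i0 p.2, p.1 i0).
have hh : involutive h.
  move=> [T U]; rewrite /h /=; congr pair; last by rewrite ffunE eqxx.
  by apply/ffunP => j; rewrite !ffunE; case: eqP => // ->.
rewrite (reindex_inj (inv_inj hh)) /=.
have -> : \sum_(p : Tab k c d * Table k c d) P (upd (h p).1 i0 (h p).2) =
          \sum_(p : Tab k c d * Table k c d) P p.1.
  by apply: eq_bigr => p _; rewrite -[in RHS](hh p).
rewrite -(pair_bigA _ (fun T (U : Table k c d) => (P T : nat))) /=.
rewrite -sum_bool big_distrl /=; apply: eq_bigr => T _.
by rewrite sum_nat_const mulnC.
Qed.

Lemma V_upd k c d (T : Tab k c d) (i0 : 'I_d) (U : Table k c d) (M : {set {set key k c}}) :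
  partial_matching M ->
  [set pdiff (upd T i0 U) e i0 | e in M] = [set pdiff T e i0 | e in M].
Proof.
move=> [Pc _]; apply: eq_in_imset => e eM.
move: (Pc e eM) => /eqP /cards2P [x [y [xy ->]]].
by rewrite !pdiff_pair ?(ltnW (ltn_ord i0)) // !derseq_upd.
Qed.

Lemma count_main k c d (i0 : 'I_d) (M : {set {set key k c}}) :
  partial_matching M ->
  #|[pred T : Tab k c d | j_independent T M i0 && i_matching T M i0.+1]| * #|Sig k| ^ #|M|
  = #|[pred T : Tab k c d | j_independent T M i0]|.
Proof.
move=> PM.
have TB0 : 0 < #|{: Table k c d}|.
  by apply/card_gt0P; exists [ffun => [ffun a => a]].
apply/eqP; rewrite -(eqn_pmul2r TB0); apply/eqP.
rewrite mulnAC !(@sum_upd k c d i0) big_distrl /=; apply: eq_bigr => T _.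
have JU : forall U, j_independent (upd T i0 U) M i0 = j_independent T M i0.
  by move=> U; rewrite /j_independent (@V_upd k c d T i0 U M PM).
under eq_bigr => U _ do rewrite JU.
under [in RHS]eq_bigr => U _ do rewrite JU.
case JT: (j_independent T M i0); last by rewrite !big1.
rewrite /=.
under eq_bigr => U _ do rewrite (@match_iff k c d T i0 M U PM).
set V := [set pdiff T e i0 | e in M].
have [LI /eqP VM] : lin_indep V /\ #|V| == #|M| by apply/andP.
have bij : bijective (@tabX k c d) by exists mxU; [exact: mxU_tabX | exact: tabX_mxU].
rewrite (reindex (@tabX k c d)) /=; last by apply: onW_bij.
under eq_bigr => X _ do rewrite mxU_tabX.
have -> : \sum_(U : Table k c d) 1 = \sum_(X : 'M['F_2]_(#|{: 'I_(c + d) * Sig k}|, k)) 1.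
  by rewrite (reindex (@tabX k c d)) //; apply: onW_bij.
rewrite sum1_card -(@core_mx _ _ k _ (@lin_rowfree k c d V LI)); congr (_ * _).
by rewrite card_mx card_Fp // card_ffun card_bool card_ord -VM -expnM mulnC.
Qed.
Import Order.TTheory Num.Theory.

Theorem lemma3p1 (k c d : nat) (M : {set {set key k c}}) (i : nat) :
  partial_matching M -> 1 <= i <= d ->
  (0 < Pr (fun T : Tab k c d => j_independent T M i.-1))%R ->
  (Pr (fun T : Tab k c d => j_independent T M i.-1 && i_matching T M i)
     / Pr (fun T : Tab k c d => j_independent T M i.-1))%R
  = (1 / (#|Sig k| ^ #|M|)%:R)%R.
Proof.
move=> PM /andP [i1 id] H.
have lt : i.-1 < d by rewrite prednK.
set i0 : 'I_d := Ordinal lt.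
have Ei : i0.+1 = i by rewrite /= prednK.
have CM := @count_main k c d i0 M PM.
rewrite /Pr in H *.
have -> : #|(fun T : Tab k c d => j_independent T M i.-1 && i_matching T M i)| =
   #|[pred T : Tab k c d | j_independent T M i0 && i_matching T M i0.+1]|.
  by apply: eq_card => T; rewrite inE /= Ei.
have Eb : #|(fun T : Tab k c d => j_independent T M i.-1)| =
   #|[pred T : Tab k c d | j_independent T M i0]|.
  by apply: eq_card => T; rewrite inE.
rewrite Eb -CM in H *.
set N := #|Tab k c d| in H *.
set a' := #|[pred T : Tab k c d | j_independent T M i0 && i_matching T M i0.+1]| in H *.
set S := #|Sig k| ^ #|M| in H *.
have aS0 : (a' * S != 0)%N.
  by apply/negP => /eqP E; move: H; rewrite E mul0r ltxx.
rewrite muln_eq0 negb_or in aS0; case/andP: aS0 => a0 S0.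
have N0 : (N != 0)%N by apply/eqP => E; move: H; rewrite E invr0 mulr0 ltxx.
rewrite natrM; field.
by rewrite !pnatr_eq0 a0 S0 N0.
Qed.
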